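(* Let $\mathbb{A}$ be an epistemic Heyting algebra, let $\mathbb{E}=(E,(\sim_i),(P_i),\Phi,\mathsf{pre})$ be a probabilistic event structure over $\mathbb{A}$, and let $\mathbb{A}'=\prod_{\mathbb{E}}\mathbb{A}$ be the intermediate algebra. For every agent $i\in\mathsf{Ag}$, $$\mathsf{Min}_i(\mathbb{A}')=\{f_{e,a}\mid e\in E\text{ and }a\in\mathsf{Min}_i(\mathbb{A})\},$$ where for $e\in E$ and $a\in\mathsf{Min}_i(\mathbb{A})$, $f_{e,a}:E\to\mathbb{A}$ is given by $f_{e,a}(e')=a$ if $e'\sim_i e$ and $f_{e,a}(e')=\bot$ otherwise.
   Context: Fix a set $\mathsf{Ag}$ of agents. A monadic Heyting algebra is a Heyting algebra $\mathbb{L}$ with, for each $i\in\mathsf{Ag}$, monotone unary operations $\lozenge_i,\Box_i$ such that for all $a,b$: $a\leq\lozenge_i a$; $\Box_i a\leq a$; $\lozenge_i(a\vee b)\leq\lozenge_i a\vee\lozenge_i b$; $\Box_i(a\to b)\leq\Box_i a\to\Box_i b$; $\lozenge_i a\leq\Box_i\lozenge_i a$; $\lozenge_i\Box_i a\leq\Box_i a$; $\Box_i(a\to b)\leq\lozenge_i a\to\lozenge_i b$; $\lozenge_i\bot\leq\bot$; $\top\leq\Box_i\top$. An epistemic Heyting algebra is a finite monadic Heyting algebra with $\lozenge_i a\vee\neg\lozenge_i a=\top$ for all $i,a$. An element $a$ is $i$-minimal if $a\neq\bot$, $\lozenge_i a=a$, and whenever $b<a$ and $\lozenge_i b=b$ then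 $b=\bot$; $\mathsf{Min}_i(\mathbb{A})$ is the set of $i$-minimal elements. A pre-ordered multiset on a set $X$ is a multiset of elements of $X$ in which the copies $x_1,\dots,x_n$ of any element carry the linear order $x_1\prec\cdots\prec x_n$. A probabilistic event structure over $\mathbb{A}$ is a tuple $(E,(\sim_i),(P_i),\Phi,\mathsf{pre})$ where: $E$ is a non-empty finite set; each $\sim_i$ is an equivalence relation on $E$; each $P_i:E\to\,]0,1]$ satisfies $\sum\{P_i(e')\mid e'\sim_i e\}=1$; $\Phi$ is a finite pre-ordered multiset on $\mathbb{A}$ such that any $a,b\in\Phi$ arising from distinct elements satisfy $a\wedge b=\bot$ or $a<b$ or $b<a$; $\mathsf{pre}(\bullet\mid a)$ is a probability distribution on $E$ for each $a\in\Phi$; and if $\mathsf{pre}(e\mid a)=0$ then $\mathsf{pre}(e\mid b)=0$ for all $b\in\Phi$ with $a<b$ (distinct elements) or $a\prec b$ (copies of the same element). The intermediate algebra $\mathbb{A}'=\prod_{\mathbb{E}}\mathbb{A}$ has as carrier all maps $f:E\to\mathbb{A}$ with pointwise Heyting operations, and $(\lozenge'_i f)(e)=\bigvee\{\lozenge_i f(e')\mid e'\sim_i e\}$, $(\Box'_i f)(e)=\bigwedge\{\Box_i f(e')\mid e'\sim_i e\}$; $i$-minimality in $\mathbb{A}'$ is with respect to $\lozenge'_i$. *)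

(* Defs.v *)
From HB Require Import structures.
From mathcomp Require Import all_boot all_order all_algebra.
From mathcomp Require Import reals.
Set Implicit Arguments.
Unset Strict Implicit.
Unset Printing Implicit Defensive.
Import Order.TTheory GRing.Theory Num.Theory.
Local Open Scope order_scope.

Section Defs.
Context {disp : Order.disp_t} (A : finTBLatticeType disp).
Context (Ag : Type).

Definition heyting_imp (imp : A -> A -> A) : Prop :=
  forall a b c : A, (c `&` a <= b) = (c <= imp a b).

Definition hneg (imp : A -> A -> A) (a : A) : A := imp a \bot.

Definition monadic_heyting (imp : A -> A -> A) (dia box : Ag -> A -> A) : Prop :=
  heyting_imp imp /\
  forall i : Ag,
  [/\ {homo dia i : a b / a <= b}, {homo box i : a b / a <= b},
      (forall a, a <= dia i a), (forall a, box i a <= a) &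
      (forall a b, dia i (a `|` b) <= dia i a `|` dia i b)] /\
  [/\ (forall a b, box i (imp a b) <= imp (box i a) (box i b)),
      (forall a, dia i a <= box i (dia i a)),
      (forall a, dia i (box i a) <= box i a) &
      (forall a b, box i (imp a b) <= imp (dia i a) (dia i b))] /\
  (dia i \bot <= \bot /\ \top <= box i \top).

Definition epistemic_heyting (imp : A -> A -> A) (dia box : Ag -> A -> A) : Prop :=
  monadic_heyting imp dia box /\
  forall i a, dia i a `|` hneg imp (dia i a) = \top.

Definition i_minimal (dia : Ag -> A -> A) (i : Ag) (a : A) : Prop :=
  [/\ a <> \bot, dia i a = a &
      forall b : A, b < a -> dia i b = b -> b = \bot].

(* The finite pre-ordered multiset Phi
   is a list; copies of the same element are ordered by position in the list
   (x_j "precedes" x_k iff j < k). *)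
Definition prob_event_structure (R : realType) (E : finType)
    (sim : Ag -> rel E) (P : Ag -> E -> R) (Phi : seq A)
    (pre : 'I_(size Phi) -> E -> R) : Prop :=
  [/\ (0 < #|E|)%N,
      (forall i, equivalence_rel (sim i)),
      (forall i e, (0 < P i e)%R /\ (P i e <= 1)%R) &
      (forall i e, (\sum_(e' | sim i e' e) P i e')%R = 1%R)] /\
  [/\
      (forall j k : 'I_(size Phi),
         nth \bot Phi j != nth \bot Phi k ->
         [\/ nth \bot Phi j `&` nth \bot Phi k = \bot,
             nth \bot Phi j < nth \bot Phi k |
             nth \bot Phi k < nth \bot Phi j]),
      (forall j e, (0 <= pre j e)%R),
      (forall j, (\sum_e pre j e)%R = 1%R) &
      (forall (j k : 'I_(size Phi)) (e : E), pre j e = 0%R ->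
         (nth \bot Phi j != nth \bot Phi k /\ nth \bot Phi j < nth \bot Phi k)
         \/ (nth \bot Phi j == nth \bot Phi k /\ (j < k)%N) ->
         pre k e = 0%R)].

(* The intermediate algebra prod_E A: carrier {ffun E -> A}, pointwise order
   and bottom, and the lifted diamond/box. *)
Definition dia' (E : finType) (sim : Ag -> rel E) (dia : Ag -> A -> A)
    (i : Ag) (f : {ffun E -> A}) : {ffun E -> A} :=
  [ffun e => \join_(e' | sim i e' e) dia i (f e')].

Definition box' (E : finType) (sim : Ag -> rel E) (box : Ag -> A -> A)
    (i : Ag) (f : {ffun E -> A}) : {ffun E -> A} :=
  [ffun e => \meet_(e' | sim i e' e) box i (f e')].

Definition fbot (E : finType) : {ffun E -> A} := [ffun => \bot].

Definition fle (E : finType) (f g : {ffun E -> A}) : Prop := forall e, f e <= g e.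
Definition flt (E : finType) (f g : {ffun E -> A}) : Prop := fle f g /\ f <> g.

Definition i_minimal' (E : finType) (sim : Ag -> rel E) (dia : Ag -> A -> A)
    (i : Ag) (f : {ffun E -> A}) : Prop :=
  [/\ f <> fbot E, dia' sim dia i f = f &
      forall g, flt g f -> dia' sim dia i g = g -> g = fbot E].

Definition f_ea (E : finType) (sim : Ag -> rel E) (i : Ag) (e : E) (a : A)
    : {ffun E -> A} :=
  [ffun e' => if sim i e' e then a else \bot].

End Defs.

(* Main.v *)
Require Import Defs.
From HB Require Import structures.
From mathcomp Require Import all_boot all_order all_algebra.
From mathcomp Require Import reals.
Import Order.TTheory.
Local Open Scope order_scope.

Section Aux.
Context {disp : Order.disp_t} (A : finTBLatticeType disp) (E : finType).

Lemma jconst (r : rel E) (e : E) (F : E -> A) (x : A) :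
  r e e -> (forall e', r e' e -> F e' = x) -> \join_(e' | r e' e) F e' = x.
Proof.
move=> ree HF; apply/le_anti/andP; split.
  by apply/joinsP => e' /HF ->.
by apply: (joins_min (j := e)) => //; rewrite HF.
Qed.

Lemma jbot (r : rel E) (e : E) (F : E -> A) :
  (forall e', r e' e -> F e' = \bot) -> \join_(e' | r e' e) F e' = \bot.
Proof.
move=> HF; apply/le_anti/andP; split; last exact: le0x.
by apply/joinsP => e' /HF ->.
Qed.
End Aux.

Theorem proposition4 (disp : Order.disp_t) (A : finTBLatticeType disp)
    (Ag : Type) (imp : A -> A -> A) (dia box : Ag -> A -> A)
    (R : realType) (E : finType) (sim : Ag -> rel E) (P : Ag -> E -> R)
    (Phi : seq A) (pre : 'I_(size Phi) -> E -> R) :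
  epistemic_heyting imp dia box ->
  prob_event_structure sim P pre ->
  forall (i : Ag) (f : {ffun E -> A}),
    i_minimal' sim dia i f <->
    exists (e : E) (a : A), i_minimal dia i a /\ f = f_ea sim i e a.
Proof.
move=> [[_ Hm] _] [[_ Heq _ _] _] i f.
have [_ [_ [dia0 _]]] := Hm i.
have dbot : dia i \bot = \bot by apply/le_anti; rewrite dia0 le0x.
have refl : forall x, sim i x x by move=> x; have [] := Heq i x x x.
have eqv : forall x y z, sim i x y -> sim i x z = sim i y z.
  by move=> x y z; have [] := Heq i x y z.
have sym : forall x y, sim i x y -> sim i y x.
  by move=> x y h; rewrite -(eqv x y x h) refl.
have trans : forall x y z, sim i x y -> sim i y z -> sim i x z.
  by move=> x y z h1 h2; rewrite (eqv x y z h1).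
have dconst : forall (g : {ffun E -> A}) e,
    (forall e', sim i e' e -> g e' = g e) -> dia' sim dia i g e = dia i (g e).
  move=> g e Hg; rewrite /dia' ffunE; apply: jconst => // e' h.
  by rewrite Hg.
have fea_fix : forall (e : E) (a : A), dia i a = a ->
    dia' sim dia i (f_ea sim i e a) = f_ea sim i e a.
  move=> e a da; apply/ffunP => e''; rewrite /dia' !ffunE.
  case: ifP => he''.
    apply: jconst => // e' h; rewrite ffunE (trans _ _ _ h he'') //.
  apply: jbot => e' h; rewrite ffunE.
  case: ifP => // h'; by rewrite (trans _ _ _ (sym _ _ h) h') in he''.
have fea_e : forall (e : E) (a : A), f_ea sim i e a e = a by move=> e a; rewrite /f_ea ffunE refl.
split.
- move=> [fnz ffix fmin].
  have [e fe] : exists e, f e != \bot.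
    apply/existsP; apply: contraT; rewrite negb_exists => /forallP H.
    by exfalso; apply: fnz; apply/ffunP => e; rewrite ffunE; apply/eqP; move: (H e); rewrite negbK.
  have cls : forall e', sim i e' e -> f e' = f e.
    move=> e' h.
    have key : forall x, f x = \join_(y | sim i y x) dia i (f y).
      by move=> x; rewrite -{1}ffix /dia' ffunE.
    rewrite (key e') (key e); apply: eq_bigl => x /=; apply/idP/idP => H; [exact: trans _ _ _ H h | exact: trans _ _ _ H (sym _ _ h)].
  set a := f e.
  have da : dia i a = a by rewrite -(dconst f e cls) ffix.
  have le_fea : forall b, b <= a -> fle (f_ea sim i e b) f.
    move=> b ba e'; rewrite ffunE; case: ifP => h; last exact: le0x.
    by rewrite cls.
  have Hf : f = f_ea sim i e a.
    apply/esym; apply: contraNeq fe => /eqP hne.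
    have := fmin _ (conj (le_fea a (lexx a)) hne) (fea_fix e a da).
    by move/(congr1 (fun g : {ffun E -> A} => g e)); rewrite fea_e ffunE => H; rewrite -/a H.
  exists e, a; split => //; split => //; first exact/eqP.
  move=> b ba db.
  have hne : f_ea sim i e b <> f.
    move/(congr1 (fun g : {ffun E -> A} => g e)); rewrite fea_e => hb.
    by move: ba; rewrite hb /a ltxx.
  have := fmin _ (conj (le_fea b (ltW ba)) hne) (fea_fix e b db).
  by move/(congr1 (fun g : {ffun E -> A} => g e)); rewrite fea_e ffunE.
- move=> [e [a [[anz da amin] ->]]]; split.
  + by move/(congr1 (fun g : {ffun E -> A} => g e)); rewrite fea_e ffunE.
  + exact: fea_fix.
  + move=> g [gle gne] gfix.
    have gout : forall e', ~~ sim i e' e -> g e' = \bot.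
      move=> e' h; apply/le_anti; rewrite le0x andbT.
      by have := gle e'; rewrite ffunE (negbTE h).
    have cls : forall e', sim i e' e -> g e' = g e.
      move=> e' h.
      have key : forall x, g x = \join_(y | sim i y x) dia i (g y).
        by move=> x; rewrite -{1}gfix /dia' ffunE.
      rewrite (key e') (key e); apply: eq_bigl => x /=; apply/idP/idP => H; [exact: trans _ _ _ H h | exact: trans _ _ _ H (sym _ _ h)].
    have dg : dia i (g e) = g e by rewrite -(dconst g e cls) gfix.
    have gea : g e <= a by have := gle e; rewrite fea_e.
    have Hg : forall b, g e = b -> g = f_ea sim i e b.
      move=> b <-; apply/ffunP => e'; rewrite ffunE; case: ifP => h.
        exact: cls.
      by rewrite gout // h.
    move: gea; rewrite le_eqVlt => /orP [/eqP ga | glt].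
      by exfalso; apply: gne; apply: Hg.
    rewrite (Hg \bot (amin _ glt dg)); apply/ffunP => e'; rewrite !ffunE.
    by case: ifP.
Qed.
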